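(* Let $B$ be an admissible Banach sequence space, $X$ a Banach space, $\|\cdot\|_m$ ($m\in\mathbb Z$) norms on $X$ each equivalent to the norm of $X$, and $(A_m)_{m\in\mathbb Z}$ a sequence of bounded linear operators on $X$. If $(A_m)_{m\in\mathbb Z}$ admits an exponential dichotomy with respect to the sequence of norms $\|\cdot\|_m$, then the operator $T_B\colon\mathcal D(T_B)\to Y_B$ is bijective (invertible).
   Context: Banach sequence spaces: let $\mathcal S$ be the set of real sequences $(s_n)_{n\in\mathbb Z}$. A linear subspace $B\subset\mathcal S$ with norm $\|\cdot\|_B$ is a normed sequence space if $\mathbf{s}'\in B$ and $|s_n|\le|s'_n|$ for all $n$ imply $\mathbf{s}\in B$ and $\|\mathbf{s}\|_B\le\|\mathbf{s}'\|_B$; it is a Banach sequence space if complete. It is admissible if (i) $\chi_{\{n\}}\in B$ and $\|\chi_{\{n\}}\|_B>0$ for all $n\in\mathbb Z$; (ii) for all $\mathbf{s}\in B$, $m\in\mathbb Z$ the shift $(s_{n+m})_n$ is in $B$ with norm at most $N\|\mathbf{s}\|_B$ for a fixed $N>0$. $Y_B$ is the space of sequences $\mathbf{x}=(x_n)_{n\in\mathbb Z}$ in $X$ with $(\|x_n\|_n)_n\in B$, normed by $\|\mathbf{x}\|_{Y_B}=\|(\|x_n\|_n)_n\|_B$. $T_B$ is defined by $(T_B\mathbf{x})_n=x_n-A_{n-1}x_{n-1}$ on the domain $\mathcal D(T_B)=\{\mathbf{x}\in Y_B: T_B\mathbf{x}\in Y_B\}$. Set $\mathcal A(n,m)=A_{n-1}\cdots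 A_m$ for $n>m$ and $\mathcal A(m,m)=\mathrm{Id}$. The sequence $(A_m)$ admits an exponential dichotomy with respect to the norms $\|\cdot\|_m$ if: (1) there are projections $P_m\colon X\to X$ with $A_mP_m=P_{m+1}A_m$ for all $m$, such that each $A_m|_{\ker P_m}\colon\ker P_m\to\ker P_{m+1}$ is invertible; (2) there are constants $D>0$ and $0<\lambda<1<\mu$ such that for all $x\in X$, $\|\mathcal A(n,m)P_mx\|_n\le D\lambda^{n-m}\|x\|_m$ for $n\ge m$, and $\|\mathcal A(n,m)Q_mx\|_n\le D\mu^{n-m}\|x\|_m$ for $n\le m$, where $Q_m=\mathrm{Id}-P_m$ and, for $n<m$, $\mathcal A(n,m)=(\mathcal A(m,n)|_{\ker P_n})^{-1}\colon\ker P_m\to\ker P_n$. *)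

(* Defs.v *)
From Stdlib Require Import Reals ZArith Lra Lia.
Open Scope R_scope.

Record BanachSpace := {
  carrier :> Type;
  vzero : carrier;
  vadd : carrier -> carrier -> carrier;
  vopp : carrier -> carrier;
  vscal : R -> carrier -> carrier;
  vnorm : carrier -> R;
  vadd_assoc : forall x y z, vadd x (vadd y z) = vadd (vadd x y) z;
  vadd_comm : forall x y, vadd x y = vadd y x;
  vadd_zero : forall x, vadd x vzero = x;
  vadd_opp : forall x, vadd x (vopp x) = vzero;
  vscal_one : forall x, vscal 1 x = x;
  vscal_assoc : forall a b x, vscal a (vscal b x) = vscal (a * b) x;
  vscal_distr_l : forall a x y, vscal a (vadd x y) = vadd (vscal a x) (vscal a y);
  vscal_distr_r : forall a b x, vscal (a + b) x = vadd (vscal a x) (vscal b x);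
  vnorm_nonneg : forall x, 0 <= vnorm x;
  vnorm_eq0 : forall x, vnorm x = 0 -> x = vzero;
  vnorm_scal : forall a x, vnorm (vscal a x) = Rabs a * vnorm x;
  vnorm_triangle : forall x y, vnorm (vadd x y) <= vnorm x + vnorm y;
  vcomplete : forall u : nat -> carrier,
    (forall eps, eps > 0 -> exists N, forall p q, (p >= N)%nat -> (q >= N)%nat ->
        vnorm (vadd (u p) (vopp (u q))) < eps) ->
    exists l, forall eps, eps > 0 -> exists N, forall p, (p >= N)%nat ->
        vnorm (vadd (u p) (vopp l)) < eps
}.

Arguments vzero {_}.
Arguments vadd {_} _ _.
Arguments vopp {_} _.
Arguments vscal {_} _ _.
Arguments vnorm {_} _.

Definition vsub {X : BanachSpace} (x y : X) : X := vadd x (vopp y).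

Definition is_norm {X : BanachSpace} (n : X -> R) : Prop :=
  (forall x, 0 <= n x) /\
  (forall x, n x = 0 -> x = vzero) /\
  (forall a x, n (vscal a x) = Rabs a * n x) /\
  (forall x y, n (vadd x y) <= n x + n y).

Definition equiv_to_norm {X : BanachSpace} (n : X -> R) : Prop :=
  exists c C, 0 < c /\ 0 < C /\ forall x, c * vnorm x <= n x /\ n x <= C * vnorm x.

Definition is_linear {X : BanachSpace} (f : X -> X) : Prop :=
  (forall x y, f (vadd x y) = vadd (f x) (f y)) /\
  (forall a x, f (vscal a x) = vscal a (f x)).

Definition bounded_linear {X : BanachSpace} (f : X -> X) : Prop :=
  is_linear f /\ exists C, forall x, vnorm (f x) <= C * vnorm x.

Fixpoint cocycle_nat {X : Type} (A : Z -> X -> X) (m : Z) (k : nat) (x : X) : X :=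
  match k with
  | O => x
  | S k' => A (m + Z.of_nat k')%Z (cocycle_nat A m k' x)
  end.

(* Acal A n m = A_{n-1} o ... o A_m for n >= m, and Id for n = m *)
Definition Acal {X : Type} (A : Z -> X -> X) (n m : Z) : X -> X :=
  cocycle_nat A m (Z.to_nat (n - m)).

Definition exp_dichotomy {X : BanachSpace} (A : Z -> X -> X) (nm : Z -> X -> R) : Prop :=
  exists (P : Z -> X -> X),
    (forall m, is_linear (P m)) /\
    (forall m x, P m (P m x) = P m x) /\
    (forall m x, A m (P m x) = P (m + 1)%Z (A m x)) /\
    (forall m x y, P m x = vzero -> P m y = vzero -> A m x = A m y -> x = y) /\
    (forall m y, P (m + 1)%Z y = vzero -> exists x, P m x = vzero /\ A m x = y) /\
    exists D lambda mu, 0 < D /\ 0 < lambda < 1 /\ 1 < mu /\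
      (forall n m x, (n >= m)%Z ->
         nm n (Acal A n m (P m x)) <= D * powerRZ lambda (n - m) * nm m x) /\
      (* for n <= m, A(n,m) Q_m x is the unique y in ker P_n with A(m,n) y = Q_m x *)
      (forall n m x y, (n <= m)%Z -> P n y = vzero ->
         Acal A m n y = vsub x (P m x) ->
         nm n y <= D * powerRZ mu (n - m) * nm m x).

Definition is_normed_seq_space (inB : (Z -> R) -> Prop) (nB : (Z -> R) -> R) : Prop :=
  inB (fun _ => 0) /\
  (forall s t, inB s -> inB t -> inB (fun n => s n + t n)) /\
  (forall a s, inB s -> inB (fun n => a * s n)) /\
  (forall s, inB s -> 0 <= nB s) /\
  (forall s, inB s -> nB s = 0 -> s = (fun _ => 0)) /\
  (forall a s, inB s -> nB (fun n => a * s n) = Rabs a * nB s) /\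
  (forall s t, inB s -> inB t -> nB (fun n => s n + t n) <= nB s + nB t) /\
  (forall s s', inB s' -> (forall n, Rabs (s n) <= Rabs (s' n)) ->
     inB s /\ nB s <= nB s').

Definition is_banach_seq_space (inB : (Z -> R) -> Prop) (nB : (Z -> R) -> R) : Prop :=
  is_normed_seq_space inB nB /\
  forall u : nat -> (Z -> R), (forall k, inB (u k)) ->
    (forall eps, eps > 0 -> exists N, forall p q, (p >= N)%nat -> (q >= N)%nat ->
        nB (fun n => u p n - u q n) < eps) ->
    exists l, inB l /\ forall eps, eps > 0 -> exists N, forall p, (p >= N)%nat ->
        nB (fun n => u p n - l n) < eps.

Definition chi_single (k : Z) : Z -> R := fun n => if Z.eq_dec n k then 1 else 0.

Definition admissible (inB : (Z -> R) -> Prop) (nB : (Z -> R) -> R) : Prop :=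
  (forall k, inB (chi_single k) /\ nB (chi_single k) > 0) /\
  exists N, N > 0 /\ forall s m, inB s ->
    inB (fun n => s (n + m)%Z) /\ nB (fun n => s (n + m)%Z) <= N * nB s.

Definition inY {X : BanachSpace} (inB : (Z -> R) -> Prop) (nm : Z -> X -> R)
  (x : Z -> X) : Prop := inB (fun n => nm n (x n)).

Definition T_op {X : BanachSpace} (A : Z -> X -> X) (x : Z -> X) : Z -> X :=
  fun n => vsub (x n) (A (n - 1)%Z (x (n - 1)%Z)).

Definition inDomT {X : BanachSpace} (inB : (Z -> R) -> Prop) (nm : Z -> X -> R)
  (A : Z -> X -> X) (x : Z -> X) : Prop :=
  inY inB nm x /\ inY inB nm (T_op A x).

(* Main.v *)
Require Import Defs.
From Stdlib Require Import Reals ZArith.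
From Stdlib Require Import Reals ZArith Lra Lia ClassicalEpsilon FunctionalExtensionality.
Open Scope R_scope.


Lemma vadd_0l (X : BanachSpace) (x : X) : vadd vzero x = x.
Proof. rewrite vadd_comm; apply vadd_zero. Qed.

Lemma vadd_oppl (X : BanachSpace) (x : X) : vadd (vopp x) x = vzero.
Proof. rewrite vadd_comm; apply vadd_opp. Qed.

Lemma vadd_cancel (X : BanachSpace) (a b c : X) : vadd a b = vadd a c -> b = c.
Proof.
  intro H. rewrite <- (vadd_0l X b), <- (vadd_0l X c), <- (vadd_oppl X a).
  rewrite <- !vadd_assoc, H; reflexivity.
Qed.

Lemma vopp_uniq (X : BanachSpace) (a b : X) : vadd a b = vzero -> vopp a = b.
Proof. intro H. apply (vadd_cancel X a). rewrite vadd_opp, H; reflexivity. Qed.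

Lemma vopp_opp (X : BanachSpace) (a : X) : vopp (vopp a) = a.
Proof. apply vopp_uniq. apply vadd_oppl. Qed.

Lemma vopp_zero (X : BanachSpace) : vopp (@vzero X) = vzero.
Proof. apply vopp_uniq. apply vadd_zero. Qed.

Lemma vswap (X : BanachSpace) (a b c : X) : vadd a (vadd b c) = vadd b (vadd a c).
Proof. rewrite !vadd_assoc, (vadd_comm X a b); reflexivity. Qed.

Lemma vopp_add (X : BanachSpace) (a b : X) : vopp (vadd a b) = vadd (vopp a) (vopp b).
Proof.
  apply vopp_uniq. rewrite <- vadd_assoc, (vswap X b), vadd_opp, vadd_zero, vadd_opp.
  reflexivity.
Qed.

Lemma vscal_0 (X : BanachSpace) (x : X) : vscal 0 x = vzero.
Proof.
  apply (vadd_cancel X (vscal 0 x)). rewrite vadd_zero, <- vscal_distr_r.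
  rewrite Rplus_0_r; reflexivity.
Qed.

Lemma vscal_m1 (X : BanachSpace) (x : X) : vscal (-1) x = vopp x.
Proof.
  symmetry. apply vopp_uniq. rewrite <- (vscal_one X x) at 1.
  rewrite <- vscal_distr_r. replace (1 + -1) with 0 by ring. apply vscal_0.
Qed.

Lemma vsub_diag (X : BanachSpace) (a : X) : vsub a a = vzero.
Proof. apply vadd_opp. Qed.

Lemma vsub_0r (X : BanachSpace) (a : X) : vsub a vzero = a.
Proof. unfold vsub. rewrite vopp_zero. apply vadd_zero. Qed.

Lemma vsub_eq0 (X : BanachSpace) (a b : X) : vsub a b = vzero -> a = b.
Proof.
  unfold vsub; intro H. apply vopp_uniq in H. rewrite <- (vopp_opp X a), H. apply vopp_opp.
Qed.

Lemma vI1 (X : BanachSpace) (a b c : X) : vsub (vadd a b) c = vadd (vsub a c) b.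
Proof. unfold vsub. rewrite <- !vadd_assoc, (vadd_comm X b). reflexivity. Qed.

Lemma vI2 (X : BanachSpace) (a c l : X) : vsub (vsub a c) (vsub l c) = vsub a l.
Proof.
  unfold vsub. rewrite vopp_add, vopp_opp, <- !vadd_assoc. f_equal.
  rewrite (vswap X (vopp c)), vadd_oppl, vadd_zero. reflexivity.
Qed.

Lemma vI3 (X : BanachSpace) (a c l : X) : vsub (vadd c a) (vadd c l) = vsub a l.
Proof.
  unfold vsub. rewrite vopp_add, <- !vadd_assoc. rewrite (vswap X a), vadd_assoc, vadd_opp, vadd_0l.
  reflexivity.
Qed.

Lemma vI4 (X : BanachSpace) (c s : X) : vsub (vadd c s) c = s.
Proof. unfold vsub. rewrite (vadd_comm X c), <- vadd_assoc, vadd_opp, vadd_zero. reflexivity. Qed.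

Lemma vI6 (X : BanachSpace) (p y : X) : vadd p (vsub y p) = y.
Proof. unfold vsub. rewrite vswap, vadd_opp, vadd_zero. reflexivity. Qed.

Lemma vI9 (X : BanachSpace) (x y z : X) : vadd (vsub x y) (vsub y z) = vsub x z.
Proof.
  unfold vsub. rewrite <- vadd_assoc. f_equal. rewrite vadd_assoc, vadd_oppl, vadd_0l. reflexivity.
Qed.

Lemma vsub_sym_opp (X : BanachSpace) (x y : X) : vsub y x = vopp (vsub x y).
Proof. unfold vsub. rewrite vopp_add, vopp_opp, vadd_comm. reflexivity. Qed.

Lemma vI5 (X : BanachSpace) (a b c d : X) :
  vsub (vsub a b) (vsub (vsub a c) (vadd d b)) = vadd c d.
Proof.
  unfold vsub. rewrite !vopp_add, !vopp_opp.
  rewrite <- !vadd_assoc. rewrite (vswap X (vopp b)). rewrite (vswap X (vopp b) c).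
  rewrite vadd_assoc, vadd_opp, vadd_0l. f_equal.
  rewrite (vadd_comm X d b), vadd_assoc, vadd_oppl, vadd_0l. reflexivity.

Qed.

Lemma lin_zero (X : BanachSpace) (f : X -> X) : is_linear f -> f vzero = vzero.
Proof.
  intros [_ Hs]. rewrite <- (vscal_0 X vzero), Hs, !vscal_0. reflexivity.
Qed.

Lemma lin_opp (X : BanachSpace) (f : X -> X) (x : X) : is_linear f -> f (vopp x) = vopp (f x).
Proof. intros [_ Hs]. rewrite <- !vscal_m1, Hs. reflexivity. Qed.

Lemma lin_sub (X : BanachSpace) (f : X -> X) (x y : X) : is_linear f -> f (vsub x y) = vsub (f x) (f y).
Proof. intros Hl. unfold vsub. rewrite (proj1 Hl), lin_opp; auto. Qed.

Lemma vnorm_is_norm (X : BanachSpace) : is_norm (@vnorm X).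
Proof.
  split; [apply vnorm_nonneg|split; [apply vnorm_eq0|split; [apply vnorm_scal|apply vnorm_triangle]]].
Qed.

Lemma nrm_opp (X : BanachSpace) (n : X -> R) (x : X) : is_norm n -> n (vopp x) = n x.
Proof.
  intros (_ & _ & Hs & _). rewrite <- vscal_m1, Hs. replace (Rabs (-1)) with 1 by (rewrite Rabs_left; lra). ring.
Qed.

Lemma nrm_zero (X : BanachSpace) (n : X -> R) : is_norm n -> n vzero = 0.
Proof.
  intros (_ & _ & Hs & _). rewrite <- (vscal_0 X vzero), Hs, Rabs_R0. ring.
Qed.

Lemma nrm_sub_sym (X : BanachSpace) (n : X -> R) (x y : X) : is_norm n -> n (vsub x y) = n (vsub y x).
Proof. intros H. rewrite (vsub_sym_opp X x y), nrm_opp; auto. Qed.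

Lemma nrm_sub_le (X : BanachSpace) (n : X -> R) (x y : X) : is_norm n -> n (vsub x y) <= n x + n y.
Proof.
  intros H. pose proof H as (_ & _ & _ & Ht). unfold vsub. rewrite <- (nrm_opp X n y H). apply Ht.
Qed.

Lemma nrm_le_sub (X : BanachSpace) (n : X -> R) (x y : X) : is_norm n -> n x <= n y + n (vsub x y).
Proof.
  intros H. pose proof H as (_ & _ & _ & Ht). rewrite <- (vI6 X y x) at 1. apply Ht.
Qed.

Lemma nrm_tri3 (X : BanachSpace) (n : X -> R) (x y z : X) : is_norm n -> n (vsub x z) <= n (vsub x y) + n (vsub y z).
Proof.
  intros H. pose proof H as (_ & _ & _ & Ht). rewrite <- (vI9 X x y z). apply Ht.
Qed.

Lemma nrm_eq0 (X : BanachSpace) (n : X -> R) (x : X) : is_norm n -> (forall eps, eps > 0 -> n x <= eps) -> x = vzero.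
Proof.
  intros H Hle. pose proof H as (Hnn & He & _ & _). apply He.
  destruct (Rle_lt_or_eq_dec 0 (n x) (Hnn x)) as [Hl|Hl]; [|auto].
  specialize (Hle (n x / 2) ltac:(lra)). lra.
Qed.

Definition conv (X : BanachSpace) (u : nat -> X) (l : X) : Prop :=
  forall eps, eps > 0 -> exists N, forall p, (p >= N)%nat -> vnorm (vsub (u p) l) < eps.

Lemma conv_unique (X : BanachSpace) u (l l' : X) : conv X u l -> conv X u l' -> l = l'.
Proof.
  intros H1 H2. apply vsub_eq0. apply (nrm_eq0 X vnorm). apply vnorm_is_norm.
  intros eps He. destruct (H1 (eps/2) ltac:(lra)) as [N1 HN1]. destruct (H2 (eps/2) ltac:(lra)) as [N2 HN2].
  specialize (HN1 (N1+N2)%nat ltac:(lia)). specialize (HN2 (N1+N2)%nat ltac:(lia)).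
  pose proof (nrm_tri3 X vnorm l (u (N1+N2)%nat) l' (vnorm_is_norm X)).
  rewrite (nrm_sub_sym X vnorm l (u (N1+N2)%nat)) in H by apply vnorm_is_norm. lra.
Qed.

Lemma conv_ext (X : BanachSpace) u v (l : X) : (forall p, u p = v p) -> conv X u l -> conv X v l.
Proof. intros He H eps Hp. destruct (H eps Hp) as [N HN]. exists N. intros p Hp'. rewrite <- He. auto. Qed.

Lemma conv_shift (X : BanachSpace) u (l : X) : conv X u l -> conv X (fun p => u (S p)) l.
Proof. intros H eps Hp. destruct (H eps Hp) as [N HN]. exists N. intros p Hp'. apply HN. lia. Qed.

Lemma conv_lin (X : BanachSpace) (f : X -> X) u l : bounded_linear f -> conv X u l -> conv X (fun p => f (u p)) (f l).
Proof.
  intros [Hl [C HC]] H eps Hp. destruct (H (eps / (Rabs C + 1))) as [N HN].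
  { apply Rdiv_lt_0_compat; [lra|pose proof (Rabs_pos C); lra]. }
  exists N. intros p Hp'. rewrite <- lin_sub by auto.
  specialize (HN p Hp'). specialize (HC (vsub (u p) l)).
  assert (C * vnorm (vsub (u p) l) <= Rabs C * vnorm (vsub (u p) l)).
  { apply Rmult_le_compat_r. apply vnorm_nonneg. apply Rle_abs. }
  assert (Rabs C * vnorm (vsub (u p) l) <= Rabs C * (eps / (Rabs C + 1))).
  { apply Rmult_le_compat_l. apply Rabs_pos. lra. }
  assert (Rabs C * (eps / (Rabs C + 1)) < eps).
  { pose proof (Rabs_pos C). apply (Rmult_lt_reg_r (Rabs C + 1)). lra.
    field_simplify; try lra. }
  lra.
Qed.

Lemma conv_subc (X : BanachSpace) u l (c : X) : conv X u l -> conv X (fun p => vsub (u p) c) (vsub l c).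
Proof. intros H eps Hp. destruct (H eps Hp) as [N HN]. exists N. intros p Hp'. rewrite vI2. auto. Qed.

Lemma conv_addc (X : BanachSpace) u l (c : X) : conv X u l -> conv X (fun p => vadd c (u p)) (vadd c l).
Proof. intros H eps Hp. destruct (H eps Hp) as [N HN]. exists N. intros p Hp'. rewrite vI3. auto. Qed.

Fixpoint vsum (X : BanachSpace) (f : nat -> X) (p : nat) : X :=
  match p with O => vzero | S p => vadd (vsum X f p) (f p) end.

Lemma vsum_shift (X : BanachSpace) f p : vsum X f (S p) = vadd (f O) (vsum X (fun j => f (S j)) p).
Proof.
  induction p as [|p IH]. simpl. rewrite vadd_0l, vadd_zero. reflexivity.
  change (vsum X f (S (S p))) with (vadd (vsum X f (S p)) (f (S p))). rewrite IH. simpl.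
  rewrite vadd_assoc. reflexivity.
Qed.

Lemma vsum_lin (X : BanachSpace) (g : X -> X) f p : is_linear g -> g (vsum X f p) = vsum X (fun j => g (f j)) p.
Proof.
  intros Hl. induction p as [|p IH]; simpl. apply lin_zero; auto. rewrite (proj1 Hl), IH. reflexivity.
Qed.

Lemma geom_tail_small K r eps : 0 <= K -> 0 <= r < 1 -> eps > 0 ->
  exists N, forall q, (q >= N)%nat -> K * r ^ q / (1 - r) < eps.
Proof.
  intros HK Hr He.
  destruct (pow_lt_1_zero r ltac:(rewrite Rabs_right; lra) (eps * (1 - r) / (K + 1))) as [N HN].
  { apply Rdiv_lt_0_compat; [apply Rmult_lt_0_compat|]; lra. }
  exists N. intros q Hq. specialize (HN q Hq). rewrite Rabs_right in HN by (apply Rle_ge, pow_le; lra).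
  apply (Rmult_lt_reg_r (1 - r)). lra. unfold Rdiv. rewrite Rmult_assoc, Rinv_l, Rmult_1_r by lra.
  assert (K * r ^ q <= K * (eps * (1 - r) / (K + 1))).
  { apply Rmult_le_compat_l; lra. }
  assert (K * (eps * (1 - r) / (K + 1)) < eps * (1 - r)).
  { apply (Rmult_lt_reg_r (K+1)). lra. field_simplify; try lra. nra. }
  lra.
Qed.

Lemma series_conv (X : BanachSpace) (f : nat -> X) K r : 0 <= K -> 0 <= r < 1 ->
  (forall j, vnorm (f j) <= K * r ^ j) -> exists l, conv X (vsum X f) l.
Proof.
  intros HK Hr Hf.
  assert (Hb : forall q d, vnorm (vsub (vsum X f (q + d)) (vsum X f q)) <= K * r ^ q * (1 - r ^ d) / (1 - r)).
  { intros q d. induction d as [|d IH].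
    - rewrite Nat.add_0_r, vsub_diag, nrm_zero by apply vnorm_is_norm. simpl. right; field; lra.
    - rewrite Nat.add_succ_r. simpl vsum. rewrite vI1.
      eapply Rle_trans. apply vnorm_triangle. eapply Rle_trans. apply Rplus_le_compat. apply IH. apply Hf.
      rewrite pow_add. right. simpl. field. lra. }
  destruct (vcomplete X (vsum X f)) as [l Hl].
  - intros eps He. destruct (geom_tail_small K r eps HK Hr He) as [N HN]. exists N. intros p q Hp Hq.
    assert (Hmain : forall p q, (p >= q)%nat -> (q >= N)%nat -> vnorm (vsub (vsum X f p) (vsum X f q)) < eps).
    { intros p0 q0 H1 H2. replace p0 with (q0 + (p0 - q0))%nat by lia. eapply Rle_lt_trans. apply Hb.
      eapply Rle_lt_trans; [|apply (HN q0 H2)]. unfold Rdiv. apply Rmult_le_compat_r. apply Rlt_le, Rinv_0_lt_compat; lra.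
      assert (0 <= r ^ (p0 - q0)) by (apply pow_le; lra). assert (0 <= r ^ q0) by (apply pow_le; lra).
      rewrite Rmult_assoc. apply Rmult_le_compat_l; auto. nra. }
    destruct (Nat.le_ge_cases q p).
    + apply Hmain; lia.
    + fold (vsub (vsum X f p) (vsum X f q)). rewrite nrm_sub_sym by apply vnorm_is_norm. apply Hmain; lia.
  - exists l. exact Hl.
Qed.

Lemma B_sub inB nB s t : is_normed_seq_space inB nB -> inB s -> inB t -> inB (fun n => s n - t n).
Proof.
  intros (H0 & Hadd & Hsc & _) Hs Ht.
  replace (fun n => s n - t n) with (fun n => s n + (fun n => -1 * t n) n).
  apply Hadd; auto. apply functional_extensionality; intro; simpl; ring.
Qed.

Lemma B_series inB nB (W : nat -> Z -> R) K r : is_banach_seq_space inB nB -> 0 <= K -> 0 <= r < 1 ->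
  (forall p, inB (W p)) -> (forall p, nB (fun n => W (S p) n - W p n) <= K * r ^ p) ->
  exists l, inB l /\ forall eps, eps > 0 -> exists N, forall p, (p >= N)%nat -> nB (fun n => W p n - l n) < eps.
Proof.
  intros [HN Hc] HK Hr HW Hst. pose proof HN as (H0 & Hadd & Hsc & Hnn & He & Hnsc & Htri & Hsol).
  assert (Hb : forall q d, nB (fun n => W (q + d)%nat n - W q n) <= K * r ^ q * (1 - r ^ d) / (1 - r)).
  { intros q d. induction d as [|d IH].
    - rewrite Nat.add_0_r. replace (fun n => W q n - W q n) with (fun n : Z => 0 * (W q n)).
      rewrite Hnsc, Rabs_R0 by auto. simpl. right; field; lra.
      apply functional_extensionality; intro; ring.
    - rewrite Nat.add_succ_r.
      replace (fun n => W (S (q + d)) n - W q n) with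
        (fun n => (fun n => W (S (q + d)) n - W (q+d)%nat n) n + (fun n => W (q + d)%nat n - W q n) n)
        by (apply functional_extensionality; intro; simpl; ring).
      eapply Rle_trans. apply Htri; apply (B_sub inB nB); auto.
      eapply Rle_trans. apply Rplus_le_compat. apply Hst. apply IH.
      rewrite pow_add. right. simpl. field. lra. }
  assert (Hsym : forall p q, nB (fun n => W p n - W q n) = nB (fun n => W q n - W p n)).
  { intros p q. replace (fun n => W p n - W q n) with (fun n => -1 * (fun n => W q n - W p n) n)
      by (apply functional_extensionality; intro; simpl; ring).
    rewrite Hnsc by (apply (B_sub inB nB); auto). replace (Rabs (-1)) with 1 by (rewrite Rabs_left; lra). ring. }
  apply (Hc W HW).
  intros eps Hep. destruct (geom_tail_small K r eps HK Hr Hep) as [N HN2]. exists N. intros p q Hp Hq.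
  assert (Hmain : forall p q, (p >= q)%nat -> (q >= N)%nat -> nB (fun n => W p n - W q n) < eps).
  { intros p0 q0 H1 H2. replace p0 with (q0 + (p0 - q0))%nat by lia. eapply Rle_lt_trans. apply Hb.
    eapply Rle_lt_trans; [|apply (HN2 q0 H2)]. unfold Rdiv. apply Rmult_le_compat_r. apply Rlt_le, Rinv_0_lt_compat; lra.
    assert (0 <= r ^ (p0 - q0)) by (apply pow_le; lra). assert (0 <= r ^ q0) by (apply pow_le; lra).
    rewrite Rmult_assoc. apply Rmult_le_compat_l; auto. nra. }
  destruct (Nat.le_ge_cases q p).
  + apply Hmain; lia.
  + rewrite Hsym. apply Hmain; lia.
Qed.

Lemma B_coord inB nB : is_normed_seq_space inB nB -> admissible inB nB ->
  exists Kc, 0 < Kc /\ forall s k, inB s -> Rabs (s k) <= Kc * nB s.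
Proof.
  intros HN [Hchi [N [HNp Hsh]]]. pose proof HN as (H0 & Hadd & Hsc & Hnn & He & Hnsc & Htri & Hsol).
  destruct (Hchi 0%Z) as [Hc0 Hc0p].
  exists (N / nB (chi_single 0)). split. apply Rdiv_lt_0_compat; lra.
  intros s k Hs. destruct (Hchi k) as [Hck Hckp].
  assert (H1 : nB (chi_single 0) <= N * nB (chi_single k)).
  { destruct (Hsh (chi_single k) k Hck) as [_ Hle].
    replace (fun n => chi_single k (n + k)%Z) with (chi_single 0) in Hle; auto.
    apply functional_extensionality; intro n. unfold chi_single.
    destruct (Z.eq_dec n 0); destruct (Z.eq_dec (n + k) k); auto; lia. }
  assert (H2 : Rabs (s k) * nB (chi_single k) <= nB s).
  { destruct (Hsol (fun n => s k * chi_single k n) s Hs) as [Hin Hle].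
    - intro n. unfold chi_single. destruct (Z.eq_dec n k).
      + subst; rewrite Rmult_1_r; lra.
      + rewrite Rmult_0_r, Rabs_R0. apply Rabs_pos.
    - rewrite Hnsc in Hle; auto. }
  assert (0 <= Rabs (s k)) by apply Rabs_pos.
  assert (Rabs (s k) * nB (chi_single 0) <= N * nB s).
  { eapply Rle_trans. apply Rmult_le_compat_l. auto. apply H1. nra. }
  apply (Rmult_le_reg_r (nB (chi_single 0))). lra. unfold Rdiv.
  replace (N * / nB (chi_single 0) * nB s * nB (chi_single 0)) with (N * nB s) by (field; lra). lra.
Qed.

Lemma coc_lin (X : BanachSpace) (A : Z -> X -> X) : (forall m, is_linear (A m)) ->
  forall m d, is_linear (cocycle_nat A m d).
Proof.
  intros HA m d. induction d as [|d IH]; split; intros; simpl; auto.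
  - rewrite (proj1 IH), (proj1 (HA _)). reflexivity.
  - rewrite (proj2 IH), (proj2 (HA _)). reflexivity.
Qed.

Lemma coc_zero (X : BanachSpace) (A : Z -> X -> X) m d : (forall m, is_linear (A m)) ->
  cocycle_nat A m d vzero = vzero.
Proof. intros HA. apply lin_zero, coc_lin; auto. Qed.

Lemma coc_comm (X : BanachSpace) (A P : Z -> X -> X) :
  (forall m x, A m (P m x) = P (m + 1)%Z (A m x)) ->
  forall n d v, cocycle_nat A n d (P n v) = P (n + Z.of_nat d)%Z (cocycle_nat A n d v).
Proof.
  intros HAP n d v. induction d as [|d IH]; simpl.
  - rewrite Z.add_0_r. reflexivity.
  - rewrite IH, HAP. f_equal. lia.
Qed.

Lemma coc_inj (X : BanachSpace) (A P : Z -> X -> X) :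
  (forall m, is_linear (A m)) ->
  (forall m x, A m (P m x) = P (m + 1)%Z (A m x)) ->
  (forall m x y, P m x = vzero -> P m y = vzero -> A m x = A m y -> x = y) ->
  forall n d z1 z2, P n z1 = vzero -> P n z2 = vzero -> cocycle_nat A n d z1 = cocycle_nat A n d z2 -> z1 = z2.
Proof.
  intros HA HAP Hinj n d. induction d as [|d IH]; intros z1 z2 H1 H2 He; simpl in *; auto.
  apply IH; auto. apply (Hinj (n + Z.of_nat d)%Z); auto.
  - rewrite <- coc_comm, H1, coc_zero; auto.
  - rewrite <- coc_comm, H2, coc_zero; auto.
Qed.

Lemma coc_surj (X : BanachSpace) (A P : Z -> X -> X) :
  (forall m y, P (m + 1)%Z y = vzero -> exists x, P m x = vzero /\ A m x = y) ->
  forall n d w, P (n + Z.of_nat d)%Z w = vzero -> exists z, P n z = vzero /\ cocycle_nat A n d z = w.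
Proof.
  intros Hs n d. induction d as [|d IH]; intros w Hw.
  - exists w. rewrite Z.add_0_r in Hw. split; auto.
  - destruct (Hs (n + Z.of_nat d)%Z w) as [u [Hu1 Hu2]].
    { replace (n + Z.of_nat d + 1)%Z with (n + Z.of_nat (S d))%Z by lia. auto. }
    destruct (IH u Hu1) as [z [Hz1 Hz2]]. exists z. split; auto. simpl. rewrite Hz2. auto.
Qed.

Lemma coc_left (X : BanachSpace) (A : Z -> X -> X) m d v :
  cocycle_nat A m (S d) v = cocycle_nat A (m + 1)%Z d (A m v).
Proof.
  induction d as [|d IH].
  - simpl. rewrite Z.add_0_r. reflexivity.
  - change (cocycle_nat A m (S (S d)) v) with (A (m + Z.of_nat (S d))%Z (cocycle_nat A m (S d) v)).
    rewrite IH. simpl. f_equal. lia.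
Qed.

Lemma coc_iter (X : BanachSpace) (A : Z -> X -> X) (z : Z -> X) :
  (forall k, z k = A (k - 1)%Z (z (k - 1)%Z)) -> forall m d, z (m + Z.of_nat d)%Z = cocycle_nat A m d (z m).
Proof.
  intros Hz m d. induction d as [|d IH].
  - simpl. rewrite Z.add_0_r. reflexivity.
  - change (cocycle_nat A m (S d) (z m)) with (A (m + Z.of_nat d)%Z (cocycle_nat A m d (z m))). rewrite Hz. replace (m + Z.of_nat (S d) - 1)%Z with (m + Z.of_nat d)%Z by lia. rewrite IH. reflexivity.
Qed.

Lemma Acal_nat (X : BanachSpace) (A : Z -> X -> X) n d v :
  Acal A (n + Z.of_nat d)%Z n v = cocycle_nat A n d v.
Proof. unfold Acal. replace (Z.to_nat (n + Z.of_nat d - n)) with d by lia. reflexivity. Qed.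

Lemma powerRZ_negnat x k : x <> 0 -> powerRZ x (- Z.of_nat k) = (/ x) ^ k.
Proof.
  intros Hx. destruct k as [|k]. simpl; reflexivity.
  rewrite pow_inv. simpl (Z.of_nat (S k)). simpl. f_equal.
  rewrite SuccNat2Pos.id_succ. reflexivity.
Qed.

Lemma vsub_add_r (X : BanachSpace) (u u' w : X) : vsub (vadd u w) (vadd u' w) = vsub u u'.
Proof. rewrite (vadd_comm X u), (vadd_comm X u'). apply vI3. Qed.

Lemma vsub_transfer (X : BanachSpace) (a c u u' : X) : vsub a u = vsub c u' -> vsub a c = vsub u u'.
Proof.
  intros H. rewrite <- (vI6 X u a), <- (vI6 X u' c), <- H. apply vsub_add_r.
Qed.

Lemma injective_part
  (inB : (Z -> R) -> Prop) (nB : (Z -> R) -> R)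
  (X : BanachSpace) (nm : Z -> X -> R) (A : Z -> X -> X)
  (HB : is_banach_seq_space inB nB)
  (HBadm : admissible inB nB)
  (Hnm : forall m, is_norm (nm m) /\ equiv_to_norm (nm m))
  (HA : forall m, bounded_linear (A m))
  (Hdich : exp_dichotomy A nm) :
  (forall x x', inDomT inB nm A x -> inDomT inB nm A x' ->
      T_op A x = T_op A x' -> x = x').
Proof.
  destruct Hdich as [P [HPlin [HPP [HAP [HAinj [HAsurj [D [lam [mu [HD [Hlam [Hmu [Hst Hun]]]]]]]]]]]]].
  assert (HAl : forall m, is_linear (A m)) by (intro m; apply (HA m)).
  intros x x' [Hx _] [Hx' _] HT.
  destruct (B_coord inB nB (proj1 HB) HBadm) as [Kc [HKc Hco]].
  pose proof (proj1 HB) as (H0 & Hadd & Hsc & Hnn & He & Hnsc & Htri & Hsol).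
  set (M := Kc * (nB (fun n => nm n (x n)) + nB (fun n => nm n (x' n)))).
  set (z := fun n => vsub (x n) (x' n)).
  assert (HM0 : 0 <= M).
  { unfold M. apply Rmult_le_pos. lra. apply Rplus_le_le_0_compat; apply Hnn; auto. }
  assert (Hzb : forall n, nm n (z n) <= M).
  { intro n. unfold z, M. eapply Rle_trans. apply nrm_sub_le. apply Hnm.
    pose proof (Hco _ n Hx). pose proof (Hco _ n Hx'). simpl in *.
    pose proof (Rle_abs (nm n (x n))). pose proof (Rle_abs (nm n (x' n))). lra. }
  assert (Hrec : forall k, z k = A (k - 1)%Z (z (k - 1)%Z)).
  { intro k. unfold z. rewrite lin_sub by auto. apply vsub_transfer.
    apply (f_equal (fun f => f k)) in HT. exact HT. }
  assert (HzP : forall n, P n (z n) = vzero).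
  { intro n. apply (nrm_eq0 X (nm n)). apply Hnm. intros eps Heps.
    destruct (pow_lt_1_zero lam ltac:(rewrite Rabs_right; lra) (eps / (D * M + 1))) as [j Hj].
    { apply Rdiv_lt_0_compat; [lra|]. pose proof (Rmult_le_pos D M ltac:(lra) HM0). lra. }
    specialize (Hj j (le_n _)). rewrite Rabs_right in Hj by (apply Rle_ge, pow_le; lra).
    set (m := (n - Z.of_nat j)%Z). replace n with (m + Z.of_nat j)%Z by (unfold m; lia).
    rewrite (coc_iter X A z Hrec), <- coc_comm by auto. rewrite <- Acal_nat.
    eapply Rle_trans. apply Hst. lia.
    replace (m + Z.of_nat j - m)%Z with (Z.of_nat j) by lia. rewrite <- pow_powerRZ.
    assert (0 <= lam ^ j) by (apply pow_le; lra).
    assert (D * lam ^ j * nm m (z m) <= D * lam ^ j * M).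
    { apply Rmult_le_compat_l. apply Rmult_le_pos; lra. auto. }
    assert (D * lam ^ j * M <= D * M * (eps / (D * M + 1))).
    { replace (D * lam ^ j * M) with ((D * M) * lam ^ j) by ring. apply Rmult_le_compat_l.
      apply Rmult_le_pos; lra. lra. }
    assert (D * M * (eps / (D * M + 1)) <= eps).
    { pose proof (Rmult_le_pos D M ltac:(lra) HM0).
      apply (Rmult_le_reg_r (D * M + 1)). lra. field_simplify; try lra; nra. }
    lra. }
  assert (Hz0 : forall n, z n = vzero).
  { intro n. apply (nrm_eq0 X (nm n)). apply Hnm. intros eps Heps.
    assert (Hmu' : 0 < / mu < 1).
    { split. apply Rinv_0_lt_compat; lra. rewrite <- Rinv_1. apply Rinv_lt_contravar; lra. }
    destruct (pow_lt_1_zero (/ mu) ltac:(rewrite Rabs_right; lra) (eps / (D * M + 1))) as [j Hj].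
    { apply Rdiv_lt_0_compat; [lra|]. pose proof (Rmult_le_pos D M ltac:(lra) HM0). lra. }
    specialize (Hj j (le_n _)). rewrite Rabs_right in Hj by (apply Rle_ge, pow_le; lra).
    eapply Rle_trans. apply (Hun n (n + Z.of_nat j)%Z (z (n + Z.of_nat j)%Z) (z n)).
    lia. apply HzP. rewrite HzP, vsub_0r, Acal_nat. symmetry. apply coc_iter; auto.
    replace (n - (n + Z.of_nat j))%Z with (- Z.of_nat j)%Z by lia. rewrite powerRZ_negnat by lra.
    assert (0 <= (/ mu) ^ j) by (apply pow_le; lra).
    assert (D * (/ mu) ^ j * nm (n + Z.of_nat j)%Z (z (n + Z.of_nat j)%Z) <= D * (/ mu) ^ j * M).
    { apply Rmult_le_compat_l. apply Rmult_le_pos; lra. auto. }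
    assert (D * (/ mu) ^ j * M <= D * M * (eps / (D * M + 1))).
    { replace (D * (/ mu) ^ j * M) with ((D * M) * (/ mu) ^ j) by ring. apply Rmult_le_compat_l.
      apply Rmult_le_pos; lra. lra. }
    assert (D * M * (eps / (D * M + 1)) <= eps).
    { pose proof (Rmult_le_pos D M ltac:(lra) HM0).
      apply (Rmult_le_reg_r (D * M + 1)). lra. field_simplify; try lra; nra. }
    lra. }
  apply functional_extensionality. intro n. apply vsub_eq0. apply Hz0.
Qed.

Definition aterm (X : BanachSpace) (A P : Z -> X -> X) (y : Z -> X) (n : Z) (j : nat) : X :=
  cocycle_nat A (n - Z.of_nat j)%Z j (P (n - Z.of_nat j)%Z (y (n - Z.of_nat j)%Z)).

Definition Gop (X : BanachSpace) (A P : Z -> X -> X) (n : Z) (d : nat) (w : X) : X :=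
  epsilon (inhabits vzero) (fun z => P n z = vzero /\ cocycle_nat A n d z = vsub w (P (n + Z.of_nat d)%Z w)).

Definition bterm (X : BanachSpace) (A P : Z -> X -> X) (y : Z -> X) (n : Z) (j : nat) : X :=
  Gop X A P n (S j) (y (n + Z.of_nat (S j))%Z).

Lemma Gop_spec (X : BanachSpace) (A P : Z -> X -> X) :
  (forall m, is_linear (P m)) -> (forall m x, P m (P m x) = P m x) ->
  (forall m y, P (m + 1)%Z y = vzero -> exists x, P m x = vzero /\ A m x = y) ->
  forall n d w, P n (Gop X A P n d w) = vzero /\
     cocycle_nat A n d (Gop X A P n d w) = vsub w (P (n + Z.of_nat d)%Z w).
Proof.
  intros HPl HPP Hs n d w. unfold Gop. apply epsilon_spec.
  apply coc_surj; auto. rewrite lin_sub, HPP, vsub_diag by auto. reflexivity.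
Qed.

Lemma Gop_unique (X : BanachSpace) (A P : Z -> X -> X) :
  (forall m, is_linear (A m)) ->
  (forall m, is_linear (P m)) -> (forall m x, P m (P m x) = P m x) ->
  (forall m x, A m (P m x) = P (m + 1)%Z (A m x)) ->
  (forall m x y, P m x = vzero -> P m y = vzero -> A m x = A m y -> x = y) ->
  (forall m y, P (m + 1)%Z y = vzero -> exists x, P m x = vzero /\ A m x = y) ->
  forall n d w z, P n z = vzero -> cocycle_nat A n d z = vsub w (P (n + Z.of_nat d)%Z w) ->
  z = Gop X A P n d w.
Proof.
  intros HAl HPl HPP HAP Hinj Hs n d w z H1 H2.
  destruct (Gop_spec X A P HPl HPP Hs n d w) as [G1 G2].
  apply (coc_inj X A P HAl HAP Hinj n d); auto. rewrite H2, G2. reflexivity.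
Qed.

Lemma aterm_step (X : BanachSpace) (A P : Z -> X -> X) y n j :
  A (n - 1)%Z (aterm X A P y (n - 1)%Z j) = aterm X A P y n (S j).
Proof.
  unfold aterm. replace (n - Z.of_nat (S j))%Z with (n - 1 - Z.of_nat j)%Z by lia.
  change (cocycle_nat A (n - 1 - Z.of_nat j)%Z (S j) ?v) with
    (A (n - 1 - Z.of_nat j + Z.of_nat j)%Z (cocycle_nat A (n - 1 - Z.of_nat j)%Z j v)).
  replace (n - 1 - Z.of_nat j + Z.of_nat j)%Z with (n - 1)%Z by lia. reflexivity.
Qed.

Lemma aterm_0 (X : BanachSpace) (A P : Z -> X -> X) y n : aterm X A P y n O = P n (y n).
Proof. unfold aterm. simpl. rewrite Z.sub_0_r. reflexivity. Qed.

Lemma bterm_step0 (X : BanachSpace) (A P : Z -> X -> X) y n :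
  (forall m, is_linear (P m)) -> (forall m x, P m (P m x) = P m x) ->
  (forall m y, P (m + 1)%Z y = vzero -> exists x, P m x = vzero /\ A m x = y) ->
  A (n - 1)%Z (bterm X A P y (n - 1)%Z O) = vsub (y n) (P n (y n)).
Proof.
  intros HPl HPP Hs. unfold bterm.
  destruct (Gop_spec X A P HPl HPP Hs (n - 1)%Z 1 (y (n - 1 + Z.of_nat 1)%Z)) as [_ G2].
  replace (n - 1 + Z.of_nat 1)%Z with n in * by lia.
  change (cocycle_nat A (n - 1)%Z 1 ?v) with (A (n - 1 + Z.of_nat 0)%Z (cocycle_nat A (n - 1)%Z 0 v)) in G2.
  replace (n - 1 + Z.of_nat 0)%Z with (n - 1)%Z in G2 by lia. simpl in G2. exact G2.
Qed.

Lemma bterm_stepS (X : BanachSpace) (A P : Z -> X -> X) y n j :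
  (forall m, is_linear (A m)) ->
  (forall m, is_linear (P m)) -> (forall m x, P m (P m x) = P m x) ->
  (forall m x, A m (P m x) = P (m + 1)%Z (A m x)) ->
  (forall m x y, P m x = vzero -> P m y = vzero -> A m x = A m y -> x = y) ->
  (forall m y, P (m + 1)%Z y = vzero -> exists x, P m x = vzero /\ A m x = y) ->
  A (n - 1)%Z (bterm X A P y (n - 1)%Z (S j)) = bterm X A P y n j.
Proof.
  intros HAl HPl HPP HAP Hinj Hs. unfold bterm.
  set (w := y (n - 1 + Z.of_nat (S (S j)))%Z).
  destruct (Gop_spec X A P HPl HPP Hs (n - 1)%Z (S (S j)) w) as [G1 G2].
  set (z := Gop X A P (n - 1)%Z (S (S j)) w) in *.
  replace (y (n + Z.of_nat (S j))%Z) with w by (unfold w; f_equal; lia).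
  apply (Gop_unique X A P HAl HPl HPP HAP Hinj Hs).
  - pose proof (HAP (n - 1)%Z z) as H. replace (n - 1 + 1)%Z with n in H by lia.
    rewrite <- H, G1. apply lin_zero; auto.
  - replace n with (n - 1 + 1)%Z at 1 by lia. rewrite <- coc_left, G2. f_equal. f_equal. lia.
Qed.

Definition vlim (X : BanachSpace) (u : nat -> X) : X := epsilon (inhabits vzero) (fun l => conv X u l).

Fixpoint Wf (D lam mu : R) (s : Z -> R) (p : nat) (n : Z) : R :=
  match p with
  | O => 0
  | S p => Wf D lam mu s p n + (D * lam ^ p * s (n + - Z.of_nat p)%Z + D * (/ mu) ^ (S p) * s (n + Z.of_nat (S p))%Z)
  end.

Lemma vsum_ext (X : BanachSpace) f g p : (forall j, f j = g j) -> vsum X f p = vsum X g p.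
Proof. intros H. induction p; simpl; auto. rewrite IHp, H. reflexivity. Qed.

Lemma surjective_part
  (inB : (Z -> R) -> Prop) (nB : (Z -> R) -> R)
  (X : BanachSpace) (nm : Z -> X -> R) (A : Z -> X -> X)
  (HB : is_banach_seq_space inB nB)
  (HBadm : admissible inB nB)
  (Hnm : forall m, is_norm (nm m) /\ equiv_to_norm (nm m))
  (HA : forall m, bounded_linear (A m))
  (Hdich : exp_dichotomy A nm) :
  (forall y, inY inB nm y -> exists x, inDomT inB nm A x /\ T_op A x = y).
Proof.
  destruct Hdich as [P [HPlin [HPP [HAP [HAinj [HAsurj [D [lam [mu [HD [Hlam [Hmu [Hst Hun]]]]]]]]]]]]].
  assert (HAl : forall m, is_linear (A m)) by (intro m; apply (HA m)).
  intros y Hy.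
  destruct (B_coord inB nB (proj1 HB) HBadm) as [Kc [HKc Hco]].
  pose proof (proj1 HB) as (H0 & Hadd & Hsc & Hnn & He & Hnsc & Htri & Hsol).
  set (s := fun k => nm k (y k)).
  assert (Hs0 : forall k, 0 <= s k) by (intro k; apply (Hnm k)).
  set (M := Kc * nB s).
  assert (HsM : forall k, s k <= M).
  { intro k. pose proof (Hco s k Hy). pose proof (Rle_abs (s k)). unfold M. lra. }
  assert (HM0 : 0 <= M) by (pose proof (HsM 0%Z); pose proof (Hs0 0%Z); lra).
  assert (Hmu' : 0 < / mu < 1).
  { split. apply Rinv_0_lt_compat; lra. rewrite <- Rinv_1. apply Rinv_lt_contravar; lra. }
  assert (Ha : forall n j, nm n (aterm X A P y n j) <= D * lam ^ j * s (n + - Z.of_nat j)%Z).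
  { intros n j. unfold aterm. change (n + - Z.of_nat j)%Z with (n - Z.of_nat j)%Z.
    pose proof (Hst n (n - Z.of_nat j)%Z (y (n - Z.of_nat j)%Z) ltac:(lia)) as H.
    unfold Acal in H. replace (Z.to_nat (n - (n - Z.of_nat j))) with j in H by lia.
    replace (n - (n - Z.of_nat j))%Z with (Z.of_nat j) in H by lia. rewrite <- pow_powerRZ in H. exact H. }
  assert (Hb : forall n j, nm n (bterm X A P y n j) <= D * (/ mu) ^ (S j) * s (n + Z.of_nat (S j))%Z).
  { intros n j. unfold bterm.
    destruct (Gop_spec X A P HPlin HPP HAsurj n (S j) (y (n + Z.of_nat (S j))%Z)) as [G1 G2].
    eapply Rle_trans. apply (Hun n (n + Z.of_nat (S j))%Z). lia. exact G1. rewrite Acal_nat. exact G2.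
    replace (n - (n + Z.of_nat (S j)))%Z with (- Z.of_nat (S j))%Z by lia.
    rewrite powerRZ_negnat by lra. right; reflexivity. }
  assert (Hca : forall n, exists l, conv X (vsum X (aterm X A P y n)) l).
  { intro n. destruct (proj2 (Hnm n)) as [c [C [Hc [HC Heq]]]].
    apply (series_conv X _ (D * M / c) lam).
    - apply Rmult_le_pos. apply Rmult_le_pos; lra. apply Rlt_le, Rinv_0_lt_compat; lra.
    - lra.
    - intro j. apply (Rmult_le_reg_l c). lra.
      eapply Rle_trans. apply (proj1 (Heq _)). eapply Rle_trans. apply Ha.
      assert (0 <= lam ^ j) by (apply pow_le; lra).
      replace (c * (D * M / c * lam ^ j)) with (D * lam ^ j * M) by (field; lra).
      apply Rmult_le_compat_l. apply Rmult_le_pos; lra. apply HsM. }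
  assert (Hcb : forall n, exists l, conv X (vsum X (bterm X A P y n)) l).
  { intro n. destruct (proj2 (Hnm n)) as [c [C [Hc [HC Heq]]]].
    apply (series_conv X _ (D * M / c) (/ mu)).
    - apply Rmult_le_pos. apply Rmult_le_pos; lra. apply Rlt_le, Rinv_0_lt_compat; lra.
    - lra.
    - intro j. apply (Rmult_le_reg_l c). lra.
      eapply Rle_trans. apply (proj1 (Heq _)). eapply Rle_trans. apply Hb.
      assert (0 <= (/ mu) ^ j) by (apply pow_le; lra).
      replace (c * (D * M / c * (/ mu) ^ j)) with (D * (/ mu) ^ j * M) by (field; lra).
      change ((/ mu) ^ (S j)) with (/ mu * (/ mu) ^ j). assert (D * (/ mu * (/ mu) ^ j) <= D * (/ mu) ^ j).
      { apply Rmult_le_compat_l. lra. nra. }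
      pose proof (HsM (n + Z.of_nat (S j))%Z). pose proof (Hs0 (n + Z.of_nat (S j))%Z).
      assert (0 <= D * (/ mu * (/ mu) ^ j)) by (apply Rmult_le_pos; nra).
      apply Rmult_le_compat; auto. }
  set (xa := fun n => vlim X (vsum X (aterm X A P y n))).
  set (xb := fun n => vlim X (vsum X (bterm X A P y n))).
  assert (Hxa : forall n, conv X (vsum X (aterm X A P y n)) (xa n)).
  { intro n. unfold xa, vlim. apply epsilon_spec. apply Hca. }
  assert (Hxb : forall n, conv X (vsum X (bterm X A P y n)) (xb n)).
  { intro n. unfold xb, vlim. apply epsilon_spec. apply Hcb. }
  set (x := fun n => vsub (xa n) (xb n)).
  assert (HAxa : forall n, A (n - 1)%Z (xa (n - 1)%Z) = vsub (xa n) (P n (y n))).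
  { intro n. eapply conv_unique. apply (conv_lin X (A (n - 1)%Z)). apply HA. apply Hxa.
    eapply conv_ext; [|apply conv_subc, conv_shift, Hxa].
    intro p. cbv beta. rewrite vsum_lin by auto. rewrite vsum_shift, aterm_0, vI4.
    apply vsum_ext. intro j. symmetry. apply aterm_step. }
  assert (HAxb : forall n, A (n - 1)%Z (xb (n - 1)%Z) = vadd (vsub (y n) (P n (y n))) (xb n)).
  { intro n. eapply conv_unique. apply (conv_lin X (A (n - 1)%Z)). apply HA. apply conv_shift, Hxb.
    eapply conv_ext; [|apply conv_addc, Hxb].
    intro p. cbv beta. symmetry. rewrite vsum_lin by auto. rewrite vsum_shift, bterm_step0 by auto. f_equal.
    apply vsum_ext. intro j. apply bterm_stepS; auto. }
  assert (HT : T_op A x = y).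
  { apply functional_extensionality. intro n. unfold T_op, x.
    rewrite lin_sub by auto. rewrite HAxa, HAxb, vI5, vI6. reflexivity. }
  destruct HBadm as [_ [NN [HNN Hsh]]].
  set (W := Wf D lam mu s).
  set (r := Rmax lam (/ mu)).
  assert (Hr : 0 <= r < 1).
  { unfold r. split. eapply Rle_trans; [|apply Rmax_l]. lra. apply Rmax_lub_lt; lra. }
  assert (HWin : forall p, inB (W p)).
  { intro p. induction p as [|p IH].
    - exact H0.
    - change (W (S p)) with (fun n => W p n + (fun n => (fun n => (D * lam ^ p) * (fun k => s (k + - Z.of_nat p)%Z) n) n
         + (fun n => (D * (/ mu) ^ (S p)) * (fun k => s (k + Z.of_nat (S p))%Z) n) n) n).
      apply Hadd; auto. apply Hadd; apply Hsc; apply Hsh; exact Hy. }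
  assert (HWst : forall p, nB (fun n => W (S p) n - W p n) <= (2 * D * NN * nB s) * r ^ p).
  { intro p.
    replace (fun n => W (S p) n - W p n) with
      (fun n => (fun n => (D * lam ^ p) * (fun k => s (k + - Z.of_nat p)%Z) n) n
         + (fun n => (D * (/ mu) ^ (S p)) * (fun k => s (k + Z.of_nat (S p))%Z) n) n)
      by (apply functional_extensionality; intro n; cbv beta; unfold W; cbn [Wf]; ring).
    destruct (Hsh s (- Z.of_nat p)%Z Hy) as [Hi1 Hn1].
    destruct (Hsh s (Z.of_nat (S p)) Hy) as [Hi2 Hn2].
    eapply Rle_trans. apply Htri; apply Hsc; auto.
    rewrite !Hnsc by auto.
    assert (Hlp : 0 <= lam ^ p <= r ^ p).
    { split. apply pow_le; lra. apply pow_incr. split. lra. apply Rmax_l. }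
    assert (Hmp : 0 <= (/ mu) ^ S p <= r ^ p).
    { split. apply pow_le; lra. simpl. assert ((/ mu) ^ p <= r ^ p).
      { apply pow_incr. split. lra. apply Rmax_r. }
      assert (0 <= (/ mu) ^ p) by (apply pow_le; lra). nra. }
    rewrite !Rabs_right by (apply Rle_ge, Rmult_le_pos; lra).
    assert (0 <= nB s) by auto.
    assert (0 <= nB (fun n => s (n + - Z.of_nat p)%Z)) by auto.
    assert (0 <= nB (fun n => s (n + Z.of_nat (S p))%Z)) by auto.
    assert (D * lam ^ p * nB (fun n => s (n + - Z.of_nat p)%Z) <= D * r ^ p * (NN * nB s)).
    { apply Rmult_le_compat. apply Rmult_le_pos; lra. auto. apply Rmult_le_compat_l; lra. auto. }
    assert (D * (/ mu) ^ S p * nB (fun n => s (n + Z.of_nat (S p))%Z) <= D * r ^ p * (NN * nB s)).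
    { apply Rmult_le_compat. apply Rmult_le_pos; lra. auto. apply Rmult_le_compat_l; lra. auto. }
    lra. }
  destruct (B_series inB nB W (2 * D * NN * nB s) r HB) as [l [Hl Hlc]]; auto.
  { assert (0 <= nB s) by auto. apply Rmult_le_pos; [|auto]. nra. }
  assert (Hpart : forall n p, nm n (vsum X (aterm X A P y n) p) + nm n (vsum X (bterm X A P y n) p) <= W p n).
  { intros n p. induction p as [|p IH].
    - cbn [vsum]. change (W O n) with 0. rewrite !(nrm_zero X (nm n)) by apply Hnm. lra.
    - simpl vsum. change (W (S p) n) with (W p n + (D * lam ^ p * s (n + - Z.of_nat p)%Z + D * (/ mu) ^ (S p) * s (n + Z.of_nat (S p))%Z)).
      pose proof (proj2 (proj2 (proj2 (proj1 (Hnm n))))) as Ht.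
      pose proof (Ht (vsum X (aterm X A P y n) p) (aterm X A P y n p)).
      pose proof (Ht (vsum X (bterm X A P y n) p) (bterm X A P y n p)).
      pose proof (Ha n p). pose proof (Hb n p). lra. }
  assert (Hxl : forall n, nm n (x n) <= l n).
  { intro n. apply le_epsilon. intros eps Heps.
    destruct (proj2 (Hnm n)) as [c [C [Hc [HC Heq]]]].
    destruct (Hxa n (eps / (3 * C))) as [N1 HN1]. apply Rdiv_lt_0_compat; lra.
    destruct (Hxb n (eps / (3 * C))) as [N2 HN2]. apply Rdiv_lt_0_compat; lra.
    destruct (Hlc (eps / (3 * Kc))) as [N3 HN3]. apply Rdiv_lt_0_compat; lra.
    set (p := (N1 + N2 + N3)%nat).
    specialize (HN1 p ltac:(unfold p; lia)). specialize (HN2 p ltac:(unfold p; lia)). specialize (HN3 p ltac:(unfold p; lia)).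
    pose proof (proj1 (Hnm n)) as Hn.
    pose proof (nrm_sub_le X (nm n) (xa n) (xb n) Hn).
    pose proof (nrm_le_sub X (nm n) (xa n) (vsum X (aterm X A P y n) p) Hn).
    pose proof (nrm_le_sub X (nm n) (xb n) (vsum X (bterm X A P y n) p) Hn).
    rewrite (nrm_sub_sym X (nm n)) in H1, H2 by auto.
    pose proof (proj2 (Heq (vsub (vsum X (aterm X A P y n) p) (xa n)))).
    pose proof (proj2 (Heq (vsub (vsum X (bterm X A P y n) p) (xb n)))).
    assert (C * vnorm (vsub (vsum X (aterm X A P y n) p) (xa n)) <= eps / 3).
    { replace (eps / 3) with (C * (eps / (3 * C))) by (field; lra). apply Rmult_le_compat_l; lra. }
    assert (C * vnorm (vsub (vsum X (bterm X A P y n) p) (xb n)) <= eps / 3).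
    { replace (eps / 3) with (C * (eps / (3 * C))) by (field; lra). apply Rmult_le_compat_l; lra. }
    pose proof (Hpart n p).
    pose proof (Hco (fun k => W p k - l k) n (B_sub inB nB _ _ (proj1 HB) (HWin p) Hl)) as Hcn. simpl in Hcn.
    pose proof (Rle_abs (W p n - l n)).
    assert (Kc * nB (fun k => W p k - l k) <= eps / 3).
    { replace (eps / 3) with (Kc * (eps / (3 * Kc))) by (field; lra). apply Rmult_le_compat_l; lra. }
    unfold x. lra. }
  exists x. split; [split|]; auto.
  - unfold inY. apply (Hsol _ l Hl). intro n. rewrite !Rabs_right. apply Hxl.
    pose proof (Hxl n). pose proof (proj1 (proj1 (Hnm n)) (x n)). lra.
    apply Rle_ge, (Hnm n).
  - rewrite HT. exact Hy.
Qed.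

Theorem theorem3p3
  (inB : (Z -> R) -> Prop) (nB : (Z -> R) -> R)
  (X : BanachSpace) (nm : Z -> X -> R) (A : Z -> X -> X)
  (HB : is_banach_seq_space inB nB)
  (HBadm : admissible inB nB)
  (Hnm : forall m, is_norm (nm m) /\ equiv_to_norm (nm m))
  (HA : forall m, bounded_linear (A m))
  (Hdich : exp_dichotomy A nm) :
  (forall x x', inDomT inB nm A x -> inDomT inB nm A x' ->
      T_op A x = T_op A x' -> x = x') /\
  (forall y, inY inB nm y -> exists x, inDomT inB nm A x /\ T_op A x = y).
Proof.
  split. apply (injective_part inB nB); auto. apply (surjective_part inB nB); auto.
Qed.
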